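(* The category $\sigma\mathbb{RS}$ of Dedekind $\sigma$-complete Riesz spaces with $\sigma$-continuous Riesz morphisms is isomorphic to the variety $\mathcal{V}_{\sigma\mathbb{RS}}$: the functor $T\colon\mathcal{V}_{\sigma\mathbb{RS}}\to\sigma\mathbb{RS}$ forgetting $\bigvee^-$ (identity on maps) and the functor $E\colon\sigma\mathbb{RS}\to\mathcal{V}_{\sigma\mathbb{RS}}$ adding $\bigvee^-(g,f_1,f_2,\dots):=\sup_{n\ge1}\{f_n\wedge g\}$ (identity on maps) are well defined and mutually inverse. In particular the category of Dedekind $\sigma$-complete Riesz spaces is an infinitary variety.
   Context: A Riesz space is Dedekind $\sigma$-complete if every countable subset with an upper bound has a supremum; a Riesz morphism (linear lattice homomorphism) is $\sigma$-continuous if it preserves all existing countable suprema. $\mathcal{V}_{\sigma\mathbb{RS}}$ is the infinitary variety of algebras with the Riesz space operations ($0,+,-,\vee,\wedge$ and scalar multiplications $\lambda\cdot-$ for $\lambda\in\mathbb{R}$) plus an operation $\bigvee^-$ of countably infinite arity, writing $\bigvee_{n\ge1}^g f_n:=\bigvee^-(g,f_1,f_2,\dots)$, satisfying the Riesz space axioms and (A1) $\bigvee_{n\ge1}^g f_n=\bigvee_{n\ge1}^g(f_n\wedge g)$; (A2) $\bigvee_{n\ge1}^g f_n=(f_1\wedge g)\vee\bigvee^-(g,f_2,f_3,\dots)$; (A3) $\bigvee_{n\ge1}^g(f_n\wedge h)\le h$ ($a\le b$ meaning $a\wedge b=a$). Morphisms preserve all operations. *)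

(* Defs.v *)
From Stdlib Require Import Reals ClassicalEpsilon.
Open Scope R_scope.

Record RieszOps (X : Type) : Type := {
  rzero : X;
  radd : X -> X -> X;
  ropp : X -> X;
  rjoin : X -> X -> X;
  rmeet : X -> X -> X;
  rscale : R -> X -> X
}.
Arguments rzero {X} _.
Arguments radd {X} _ _ _.
Arguments ropp {X} _ _.
Arguments rjoin {X} _ _ _.
Arguments rmeet {X} _ _ _.
Arguments rscale {X} _ _ _.

Definition rle {X} (o : RieszOps X) (a b : X) : Prop := rmeet o a b = a.

Definition is_riesz_space {X} (o : RieszOps X) : Prop :=
  (forall x y z, radd o x (radd o y z) = radd o (radd o x y) z) /\
  (forall x y, radd o x y = radd o y x) /\
  (forall x, radd o (rzero o) x = x) /\
  (forall x, radd o x (ropp o x) = rzero o) /\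
  (forall a x y, rscale o a (radd o x y) = radd o (rscale o a x) (rscale o a y)) /\
  (forall a b x, rscale o (a + b) x = radd o (rscale o a x) (rscale o b x)) /\
  (forall a b x, rscale o (a * b) x = rscale o a (rscale o b x)) /\
  (forall x, rscale o 1 x = x) /\
  (forall x y z, rmeet o x (rmeet o y z) = rmeet o (rmeet o x y) z) /\
  (forall x y z, rjoin o x (rjoin o y z) = rjoin o (rjoin o x y) z) /\
  (forall x y, rmeet o x y = rmeet o y x) /\
  (forall x y, rjoin o x y = rjoin o y x) /\
  (forall x y, rmeet o x (rjoin o x y) = x) /\
  (forall x y, rjoin o x (rmeet o x y) = x) /\
  (forall x y z, rle o x y -> rle o (radd o x z) (radd o y z)) /\
  (forall a x y, 0 <= a -> rle o x y -> rle o (rscale o a x) (rscale o a y)).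

Definition is_sup {X} (o : RieszOps X) (f : nat -> X) (s : X) : Prop :=
  (forall n, rle o (f n) s) /\
  (forall u, (forall n, rle o (f n) u) -> rle o s u).

(* Dedekind sigma-complete: every bounded-above countable (nonempty) subset,
   given as the range of a sequence, has a supremum *)
Definition sigma_complete {X} (o : RieszOps X) : Prop :=
  forall f : nat -> X, (exists u, forall n, rle o (f n) u) -> exists s, is_sup o f s.

Definition riesz_morphism {X Y} (oX : RieszOps X) (oY : RieszOps Y) (h : X -> Y) : Prop :=
  (forall x y, h (radd oX x y) = radd oY (h x) (h y)) /\
  (forall a x, h (rscale oX a x) = rscale oY a (h x)) /\
  (forall x y, h (rjoin oX x y) = rjoin oY (h x) (h y)) /\
  (forall x y, h (rmeet oX x y) = rmeet oY (h x) (h y)).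

Definition sigma_continuous {X Y} (oX : RieszOps X) (oY : RieszOps Y) (h : X -> Y) : Prop :=
  forall (f : nat -> X) (s : X), is_sup oX f s -> is_sup oY (fun n => h (f n)) (h s).

(* The countably-infinitary operation: bv g f = \bigvee^-(g, f_1, f_2, ...),
   with f_{n+1} represented as f n. *)
Definition BvOp (X : Type) : Type := X -> (nat -> X) -> X.

Definition is_V_algebra {X} (o : RieszOps X) (bv : BvOp X) : Prop :=
  is_riesz_space o /\
  (* (A1) *) (forall g f, bv g f = bv g (fun n => rmeet o (f n) g)) /\
  (* (A2) *) (forall g f, bv g f = rjoin o (rmeet o (f 0%nat) g) (bv g (fun n => f (S n)))) /\
  (* (A3) *) (forall g h f, rle o (bv g (fun n => rmeet o (f n) h)) h).

Definition V_hom {X Y} (oX : RieszOps X) (bvX : BvOp X) (oY : RieszOps Y) (bvY : BvOp Y)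
    (h : X -> Y) : Prop :=
  h (rzero oX) = rzero oY /\
  (forall x y, h (radd oX x y) = radd oY (h x) (h y)) /\
  (forall x, h (ropp oX x) = ropp oY (h x)) /\
  (forall x y, h (rjoin oX x y) = rjoin oY (h x) (h y)) /\
  (forall x y, h (rmeet oX x y) = rmeet oY (h x) (h y)) /\
  (forall a x, h (rscale oX a x) = rscale oY a (h x)) /\
  (forall g f, h (bvX g f) = bvY (h g) (fun n => h (f n))).

(* The functor E on objects: bv g f := sup_n (f_n /\ g) (chosen by epsilon;
   it is the supremum whenever that exists, which it does in a sigma-complete space). *)
Definition E_bv {X} (o : RieszOps X) : BvOp X :=
  fun g f => epsilon (inhabits g) (fun s => is_sup o (fun n => rmeet o (f n) g) s).

(* Main.v *)
Require Import Defs.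
From Stdlib Require Import Reals ClassicalEpsilon FunctionalExtensionality.
Open Scope R_scope.

Lemma L_macc {X} (o : RieszOps X) : is_riesz_space o ->
  (forall x y z, rmeet o x (rmeet o y z) = rmeet o (rmeet o x y) z) /\
  (forall x y z, rjoin o x (rjoin o y z) = rjoin o (rjoin o x y) z) /\
  (forall x y, rmeet o x y = rmeet o y x) /\
  (forall x y, rjoin o x y = rjoin o y x) /\
  (forall x y, rmeet o x (rjoin o x y) = x) /\
  (forall x y, rjoin o x (rmeet o x y) = x).
Proof. intros H; repeat destruct H as [? H]; tauto. Qed.

Lemma le_refl {X} (o : RieszOps X) : is_riesz_space o -> forall x, rle o x x.
Proof.
  intros H x; destruct (L_macc o H) as (ma&ja&mc&jc&a1&a2); unfold rle.
  transitivity (rmeet o x (rjoin o x (rmeet o x x))). { rewrite a2; reflexivity. } apply a1.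
Qed.

Lemma le_antisym {X} (o : RieszOps X) : is_riesz_space o -> forall x y,
  rle o x y -> rle o y x -> x = y.
Proof.
  intros H x y h1 h2; destruct (L_macc o H) as (ma&ja&mc&jc&a1&a2); unfold rle in *.
  rewrite <- h1, mc; exact h2.
Qed.

Lemma le_trans {X} (o : RieszOps X) : is_riesz_space o -> forall x y z,
  rle o x y -> rle o y z -> rle o x z.
Proof.
  intros H x y z h1 h2; destruct (L_macc o H) as (ma&ja&mc&jc&a1&a2); unfold rle in *.
  rewrite <- h1, <- ma, h2; reflexivity.
Qed.

Lemma meet_lb1 {X} (o : RieszOps X) : is_riesz_space o -> forall x y, rle o (rmeet o x y) x.
Proof.
  intros H x y; destruct (L_macc o H) as (ma&ja&mc&jc&a1&a2); unfold rle.
  rewrite (mc x y), <- ma, (le_refl o H x); reflexivity.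
Qed.

Lemma meet_lb2 {X} (o : RieszOps X) : is_riesz_space o -> forall x y, rle o (rmeet o x y) y.
Proof.
  intros H x y; destruct (L_macc o H) as (ma&ja&mc&jc&a1&a2).
  rewrite mc; apply meet_lb1; auto.
Qed.

Lemma meet_glb {X} (o : RieszOps X) : is_riesz_space o -> forall x y z,
  rle o z x -> rle o z y -> rle o z (rmeet o x y).
Proof.
  intros H x y z h1 h2; destruct (L_macc o H) as (ma&ja&mc&jc&a1&a2); unfold rle in *.
  rewrite ma, h1, h2; reflexivity.
Qed.

Lemma le_join {X} (o : RieszOps X) : is_riesz_space o -> forall x y,
  rle o x y <-> rjoin o x y = y.
Proof.
  intros H x y; destruct (L_macc o H) as (ma&ja&mc&jc&a1&a2); unfold rle; split; intro h.
  - rewrite <- h, jc, mc; apply a2.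
  - rewrite <- h; apply a1.
Qed.

Lemma join_ub1 {X} (o : RieszOps X) : is_riesz_space o -> forall x y, rle o x (rjoin o x y).
Proof. intros H x y; destruct (L_macc o H) as (ma&ja&mc&jc&a1&a2); apply a1. Qed.

Lemma join_ub2 {X} (o : RieszOps X) : is_riesz_space o -> forall x y, rle o y (rjoin o x y).
Proof. intros H x y; destruct (L_macc o H) as (ma&ja&mc&jc&a1&a2); rewrite jc; apply a1. Qed.

Lemma join_lub {X} (o : RieszOps X) : is_riesz_space o -> forall x y z,
  rle o x z -> rle o y z -> rle o (rjoin o x y) z.
Proof.
  intros H x y z h1 h2; destruct (L_macc o H) as (ma&ja&mc&jc&a1&a2).
  apply le_join in h1; auto; apply le_join in h2; auto; apply le_join; auto.
  rewrite <- ja, h2, h1; reflexivity.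
Qed.

Lemma sup_unique {X} (o : RieszOps X) : is_riesz_space o -> forall f s t,
  is_sup o f s -> is_sup o f t -> s = t.
Proof.
  intros H f s t [u1 l1] [u2 l2]; apply (le_antisym o H); [apply l1 | apply l2]; auto.
Qed.

Lemma V_sup {X} (o : RieszOps X) bv : is_V_algebra o bv ->
  forall g f, is_sup o (fun n => rmeet o (f n) g) (bv g f).
Proof.
  intros [H [A1 [A2 A3]]] g f; split.
  - intro n; revert f; induction n as [|n IH]; intro f.
    + rewrite A2; apply join_ub1; auto.
    + apply (le_trans o H) with (bv g (fun n => f (S n))); [apply (IH (fun n => f (S n)))|].
      rewrite (A2 g f); apply join_ub2; auto.
  - intros u hu. rewrite A1.
    replace (fun n => rmeet o (f n) g) with (fun n => rmeet o (rmeet o (f n) g) u).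
    + apply (A3 g u (fun n => rmeet o (f n) g)).
    + apply functional_extensionality; intro n; apply hu.
Qed.

Lemma E_spec {X} (o : RieszOps X) : forall g f,
  (exists s, is_sup o (fun n => rmeet o (f n) g) s) ->
  is_sup o (fun n => rmeet o (f n) g) (E_bv o g f).
Proof.
  intros g f Hs; unfold E_bv.
  apply (epsilon_spec (inhabits g) (fun s => is_sup o (fun n => rmeet o (f n) g) s) Hs).
Qed.

Lemma E_sup {X} (o : RieszOps X) : is_riesz_space o -> sigma_complete o ->
  forall g f, is_sup o (fun n => rmeet o (f n) g) (E_bv o g f).
Proof.
  intros H Hc g f; apply E_spec, Hc; exists g; intro n; apply meet_lb2; auto.
Qed.

Theorem mainTheorem3 :
  (* T well defined on objects *)
  (forall (X : Type) (o : RieszOps X) (bv : BvOp X),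
      is_V_algebra o bv -> is_riesz_space o /\ sigma_complete o) /\
  (* T well defined on maps *)
  (forall (X Y : Type) (oX : RieszOps X) (bvX : BvOp X) (oY : RieszOps Y) (bvY : BvOp Y)
      (h : X -> Y),
      is_V_algebra oX bvX -> is_V_algebra oY bvY -> V_hom oX bvX oY bvY h ->
      riesz_morphism oX oY h /\ sigma_continuous oX oY h) /\
  (* E well defined on objects (the defining suprema exist) *)
  (forall (X : Type) (o : RieszOps X),
      is_riesz_space o -> sigma_complete o ->
      (forall g f, is_sup o (fun n => rmeet o (f n) g) (E_bv o g f)) /\
      is_V_algebra o (E_bv o)) /\
  (* E well defined on maps *)
  (forall (X Y : Type) (oX : RieszOps X) (oY : RieszOps Y) (h : X -> Y),
      is_riesz_space oX -> sigma_complete oX ->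
      is_riesz_space oY -> sigma_complete oY ->
      riesz_morphism oX oY h -> sigma_continuous oX oY h ->
      V_hom oX (E_bv oX) oY (E_bv oY) h) /\
  (* E (T A) = A *)
  (forall (X : Type) (o : RieszOps X) (bv : BvOp X),
      is_V_algebra o bv -> E_bv o = bv).
Proof.
  split; [|split; [|split; [|split]]].
  - intros X o bv HV; split; [apply HV|].
    intros f [u hu]; exists (bv u f).
    pose proof (V_sup o bv HV u f) as S.
    replace (fun n => rmeet o (f n) u) with f in S; [exact S|].
    apply functional_extensionality; intro n; symmetry; apply hu.
  - intros X Y oX bvX oY bvY h HX HY (h0&hadd&hopp&hj&hm&hs&hb); split.
    + repeat split; auto.
    + intros f s Hs.
      assert (E : s = bvX s f).
      { apply (sup_unique oX (proj1 HX) f); [exact Hs|].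
        pose proof (V_sup oX bvX HX s f) as S.
        replace (fun n => rmeet oX (f n) s) with f in S; [exact S|].
        apply functional_extensionality; intro n; symmetry; apply (proj1 Hs). }
      rewrite E at 1; rewrite hb.
      pose proof (V_sup oY bvY HY (h s) (fun n => h (f n))) as S; cbv beta in S.
      replace (fun n => rmeet oY (h (f n)) (h s)) with (fun n => h (f n)) in S; [exact S|].
      apply functional_extensionality; intro n; rewrite <- hm, (proj1 Hs n); reflexivity.
  - intros X o H Hc; pose proof (E_sup o H Hc) as ES; split; [exact ES|].
    split; [exact H|split; [|split]].
    + intros g f. unfold E_bv at 2.
      replace (fun n => rmeet o (rmeet o (f n) g) g) with (fun n => rmeet o (f n) g);
        [reflexivity|].
      apply functional_extensionality; intro n; symmetry.
      apply (meet_lb2 o H).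
    + intros g f. apply (sup_unique o H (fun n => rmeet o (f n) g)); [apply ES|].
      split.
      * intros [|n].
        -- apply join_ub1; auto.
        -- apply (le_trans o H) with (E_bv o g (fun n => f (S n))).
           ++ apply (proj1 (ES g (fun n => f (S n))) n).
           ++ apply join_ub2; auto.
      * intros u hu; apply join_lub; auto.
        apply (proj2 (ES g (fun n => f (S n)))); intro n; apply (hu (S n)).
    + intros g u f. apply (proj2 (ES g (fun n => rmeet o (f n) u))).
      intro n; apply (le_trans o H) with (rmeet o (f n) u);
        [apply meet_lb1 | apply meet_lb2]; auto.
  - intros X Y oX oY h HX HcX HY HcY (hadd&hs&hj&hm) hc.
    pose proof HY as HY0; destruct HY as (pa&pc&p0&pn&HYr).
    assert (h0 : h (rzero oX) = rzero oY).
    { assert (e : h (rzero oX) = radd oY (h (rzero oX)) (h (rzero oX))).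
      { rewrite <- hadd, (proj1 (proj2 (proj2 HX))); reflexivity. }
      set (z := h (rzero oX)) in *.
      transitivity (radd oY (radd oY z z) (ropp oY z)).
      - rewrite <- pa, pn, pc, p0; reflexivity.
      - rewrite <- e; apply pn. }
    repeat split; auto.
    + intro x. set (a := h (ropp oX x)).
      transitivity (radd oY (radd oY a (h x)) (ropp oY (h x))).
      * rewrite <- pa, pn, pc, p0; reflexivity.
      * unfold a; rewrite <- hadd, (proj1 (proj2 HX) (ropp oX x) x), (proj1 (proj2 (proj2 (proj2 HX)))), h0, p0.
        reflexivity.
    + intros g f.
      pose proof HY0 as HY.
      apply (sup_unique oY HY (fun n => rmeet oY (h (f n)) (h g))).
      * replace (fun n => rmeet oY (h (f n)) (h g)) with (fun n => h (rmeet oX (f n) g)).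
        -- apply hc, E_sup; auto.
        -- apply functional_extensionality; intro n; apply hm.
      * apply E_sup; auto.
  - intros X o bv HV; apply functional_extensionality; intro g;
      apply functional_extensionality; intro f.
    apply (sup_unique o (proj1 HV) (fun n => rmeet o (f n) g)).
    + apply E_sup; [apply HV|]. intros f' [u hu]; exists (bv u f').
      pose proof (V_sup o bv HV u f') as S.
      replace (fun n => rmeet o (f' n) u) with f' in S; [exact S|].
      apply functional_extensionality; intro n; symmetry; apply hu.
    + apply V_sup; auto.
Qed.
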